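(* Let $G=(V,E)$ be a finite, simple, undirected, connected graph with no isolated vertices that has at least one split independent set. Then $\beta_s(G)\le \Gamma_s(G)$ and $\gamma_s(G)\le i_s(G)$.
   Context: For $X\subseteq V$, $\langle X\rangle$ denotes the induced subgraph on $X$. A set $D\subseteq V$ is dominating if every vertex of $V\setminus D$ has a neighbor in $D$. A dominating set $S$ is a split dominating set if $\langle V\setminus S\rangle$ is disconnected or a $K_1$. A split dominating set $S$ is a minimal split dominating set if for every $u\in S$ the set $S\setminus\{u\}$ is not a split dominating set. A set $S$ is a split independent set if $S$ is independent and $\langle V\setminus S\rangle$ is disconnected or a $K_1$; it is a maximal split independent set if for every $v\in V\setminus S$, either $S\cup\{v\}$ is not independent or $\langle V\setminus (S\cup\{v\})\rangle$ is connected. Parameters: $\gamma_s(G)=\min\{|S|: S\text{ split dominating}\}$; $\Gamma_s(G)=\max\{|S|: S\text{ minimal split dominating}\}$; $i_s(G)=\min\{|S|: S\text{ maximal split independent}\}$; $\beta_s(G)=\max\{|S|: S\text{ maximal split independent}\}$. *)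

(* Defs.v *)
(* a finite simple graph is a symmetric irreflexive
   relation e on a finType T (vertex set V = T). *)
From mathcomp Require Import all_boot.
Set Implicit Arguments. Unset Strict Implicit. Unset Printing Implicit Defensive.

Section SplitDom.
Variables (T : finType) (e : rel T).

Definition induced_rel (X : {set T}) : rel T :=
  [rel a b | [&& a \in X, b \in X & e a b]].

Definition induced_connected (X : {set T}) : bool :=
  [forall x in X, forall y in X, connect (induced_rel X) x y].

Definition induced_disconnected (X : {set T}) : bool := ~~ induced_connected X.

Definition disc_or_K1 (X : {set T}) : bool :=
  induced_disconnected X || (#|X| == 1).

Definition dominating (D : {set T}) : bool :=
  [forall v in ~: D, exists u in D, e v u].

Definition independent (S : {set T}) : bool :=
  [forall u in S, forall v in S, ~~ e u v].

Definition split_dominating (S : {set T}) : bool :=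
  dominating S && disc_or_K1 (~: S).

Definition minimal_split_dominating (S : {set T}) : bool :=
  split_dominating S && [forall u in S, ~~ split_dominating (S :\ u)].

Definition split_independent (S : {set T}) : bool :=
  independent S && disc_or_K1 (~: S).

Definition maximal_split_independent (S : {set T}) : bool :=
  split_independent S &&
  [forall v in ~: S, ~~ independent (v |: S) || induced_connected (~: (v |: S))].

(* gamma_s: minimum cardinality of a split dominating set
   (default #|T|.+1 if there is none) *)
Definition gamma_s : nat :=
  \big[minn/#|T|.+1]_(S : {set T} | split_dominating S) #|S|.

(* Gamma_s: maximum cardinality of a minimal split dominating set (0 if none) *)
Definition Gamma_s : nat :=
  \max_(S : {set T} | minimal_split_dominating S) #|S|.

Definition i_s : nat :=
  \big[minn/#|T|.+1]_(S : {set T} | maximal_split_independent S) #|S|.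

Definition beta_s : nat :=
  \max_(S : {set T} | maximal_split_independent S) #|S|.

End SplitDom.

(* Main.v *)
Require Import Defs.
From mathcomp Require Import all_boot.

Lemma msi_msd (T : finType) (e : rel T)
  (e_sym : symmetric e) (e_irr : irreflexive e)
  (no_isolated : forall v : T, exists u : T, e v u) (S : {set T}) :
  maximal_split_independent e S -> minimal_split_dominating e S.
Proof.
case/andP=> /andP[ind spl] /forallP maxl.
have indP : forall a b, a \in S -> b \in S -> ~~ e a b.
  by move=> a b aS bS; move/forallP: ind => /(_ a); rewrite aS /= => /forallP/(_ b); rewrite bS.
apply/andP; split; last first.
  apply/forallP=> u; apply/implyP=> uS.
  apply/negP=> /andP[/forallP/(_ u) + _].
  rewrite !inE eqxx /= => /existsP[w /andP[]]; rewrite !inE => /andP[_ wS].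
  by rewrite (negbTE (indP _ _ uS wS)).
apply/andP; split => //.
apply/forallP=> v; apply/implyP=> vnS.
case: (boolP [exists u in S, e v u]) => // H.
have nbv : forall w, w \in S -> ~~ e v w.
  move=> w wS; apply/negP=> evw.
  by move/negP: H; apply; apply/existsP; exists w; rewrite wS.
move: (maxl v); rewrite vnS /= => /orP[].
  case/negP; apply/forallP=> a; apply/implyP; rewrite in_setU1 => /orP[/eqP->|aS];
    apply/forallP=> b; apply/implyP; rewrite in_setU1 => /orP[/eqP->|bS].
  - by rewrite e_irr.
  - exact: nbv.
  - by rewrite e_sym; apply: nbv.
  - exact: indP.
move=> Ccon.
have [u evu] := no_isolated v.
have unS : u \in ~: S by rewrite inE; apply/negP=> uS; move: (nbv u uS); rewrite evu.
have uv : u != v by apply/eqP=> uv; move: evu; rewrite uv e_irr.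
have uvS : u \in ~: (v |: S) by rewrite !inE negb_or uv; rewrite inE in unS.
set R := induced_rel e (~: S).
have Rsym : symmetric R by move=> a b; rewrite /R /induced_rel /= e_sym andbCA.
have sub : subrel (induced_rel e (~: (v |: S))) (connect R).
  move=> a b /= /and3P[aX bX eab]; apply: connect1; rewrite /R /induced_rel /= eab andbT.
  by move: aX bX; rewrite !inE !negb_or => /andP[_ ->] /andP[_ ->].
have toU : forall z, z \in ~: S -> connect R z u.
  move=> z zS; case: (eqVneq z v) => [->|zv].
    by apply: connect1; rewrite /R /induced_rel /= vnS unS evu.
  apply: (connect_sub sub).
  move/forallP: Ccon => /(_ z) /implyP; rewrite !inE negb_or zv /=.
  rewrite inE in zS => /(_ zS) /forallP /(_ u) /implyP; apply.
  by rewrite !inE negb_or uv; rewrite inE in unS.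
have conn : induced_connected e (~: S).
  apply/forallP=> x; apply/implyP=> xS; apply/forallP=> y; apply/implyP=> yS.
  apply: connect_trans (toU x xS) _.
  by rewrite (sym_connect_sym Rsym); apply: toU.
move: spl; rewrite /disc_or_K1 /induced_disconnected conn /=.
have : #|[set u; v]| <= #|~: S|.
  apply: subset_leq_card; apply/subsetP=> z; rewrite !inE => /orP[] /eqP ->.
  - by rewrite -in_setC.
  - by rewrite -in_setC.
by rewrite cards2 uv => /gtn_eqF ->.
Qed.

Lemma bigmin_le (I : finType) (P : pred I) (F : I -> nat) n i :
  P i -> \big[minn/n]_(j | P j) F j <= F i.
Proof.
move=> Pi; rewrite -big_filter.
have : i \in [seq j <- index_enum I | P j] by rewrite mem_filter Pi mem_index_enum.
elim: [seq j <- index_enum I | P j] => //= a s IH.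
rewrite inE big_cons => /orP[/eqP->|/IH H]; first exact: geq_minl.
exact: leq_trans (geq_minr _ _) H.
Qed.

Theorem mainTheorem3 (T : finType) (e : rel T)
  (e_sym : symmetric e) (e_irr : irreflexive e)
  (G_conn : forall x y : T, connect e x y)
  (no_isolated : forall v : T, exists u : T, e v u)
  (has_split_indep : exists S : {set T}, split_independent e S) :
  (beta_s e <= Gamma_s e) /\ (gamma_s e <= i_s e).
Proof.
split.
  apply/bigmax_leqP=> S HS; apply: leq_bigmax_cond; exact: (@msi_msd T e e_sym e_irr no_isolated S HS).
rewrite /i_s; apply: (big_ind (fun x => gamma_s e <= x)).
- rewrite /gamma_s; apply: (big_ind (fun x => x <= #|T|.+1)) => //.
    by move=> x y hx hy; rewrite geq_min hx.
  by move=> S _; apply: leqW; apply: max_card.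
- by move=> x y hx hy; rewrite leq_min hx hy.
- move=> S HS; apply: bigmin_le.
  by case/andP: (@msi_msd T e e_sym e_irr no_isolated S HS).
Qed.
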